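(* Let $\Sigma=\{\sigma,\sigma'\}$. There is a Pavlovian population protocol computing the predicate $[x.\sigma\ge x.\sigma']$. Explicitly: $Q=\{\sigma,\sigma',Y,N\}$, $\iota$ the inclusion, $\omega(\sigma)=\omega(Y)=1$, $\omega(\sigma')=\omega(N)=0$, with rules $NY\to YY$, $YN\to YY$, $N\sigma\to Y\sigma$, $\sigma N\to\sigma Y$, $Y\sigma'\to N\sigma'$, $\sigma'Y\to\sigma'N$, $\sigma\sigma'\to NY$, $\sigma'\sigma\to YN$, and $q_1q_2\to q_1q_2$ for all other pairs; this is the protocol associated to the payoff matrix with rows (player) and columns (opponent) ordered $N,Y,\sigma,\sigma'$: row $N$: $(1,-1,-1,1)$; row $Y$: $(0,1,1,-1)$; row $\sigma$: $(0,0,0,-1)$; row $\sigma'$: $(0,0,-1,0)$.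
   Context: A population protocol is a tuple $(Q,\Sigma,\iota,\omega,\delta)$ where $Q$ is a finite set of states, $\Sigma$ a finite input alphabet, $\iota:\Sigma\to Q$, $\omega:Q\to\{0,1\}$, and $\delta\subseteq Q^4$ the transition relation; we write $q_1q_2\to q_1'q_2'$ for $(q_1,q_2,q_1',q_2')\in\delta$. Computations take place among $n\ge 2$ agents. A configuration is a multiset of $n$ elements of $Q$. An input is a multiset $x$ of $n\ge 2$ elements of $\Sigma$ (equivalently an element of $\mathbb N^{\Sigma}$ with total mass $n$; $x.\sigma$ denotes the multiplicity of $\sigma$ in $x$), and its initial configuration is the multiset $\iota(x)$. We write $C\to C'$ if $C'$ is obtained from $C$ by choosing two of its elements (two distinct agents) in states $q_1,q_2$ and replacing them by $q_1',q_2'$ for some $(q_1,q_2,q_1',q_2')\in\delta$. An execution is an infinite sequence $C_0,C_1,\dots$ with $C_0$ an initial configuration and $C_i\to C_{i+1}$ for all $i$. An execution is fair if for every configuration $C$ occurring infinitely often and every $C'$ with $C\to C'$, $C'$ also occurs infinitely often. A protocol computes a predicate $p:\mathbb N^\Sigma\to\{0,1\}$ if for every input $x$ and every fair execution from $\iota(x)$, there is a time after which every agent's output $\omega(q)$ equals $p(x)$. A symmetric game on $Q$ is a real matrix $M=(M_{q,r})_{q,r\in Q}$ ($M_{q,r}$ = payoff of playing $q$ against $r$). For $q',y\in Q$, $BR_{\neq q'}(y)$ is the set of $x\in Q\setminus\{q'\}$ with $M_{z,y}\le M_{x,y}$ for all $z\in Q\setminus\{q'\}$. The transition relation associated to $M$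 consists of exactly those $(q_1,q_2,q_1',q_2')$ with: $q_1'=q_1$ if $M_{q_1,q_2}\ge0$, $q_1'\in BR_{\neq q_1}(q_2)$ if $M_{q_1,q_2}<0$; $q_2'=q_2$ if $M_{q_2,q_1}\ge0$, $q_2'\in BR_{\neq q_2}(q_1)$ if $M_{q_2,q_1}<0$. A population protocol is Pavlovian if $\delta$ equals the transition relation associated to some real matrix indexed by $Q\times Q$. *)

(* Defs.v *)
From Stdlib Require Import Reals.
From HB Require Import structures.
From mathcomp Require Import all_boot.

Set Implicit Arguments.
Unset Strict Implicit.
Unset Printing Implicit Defensive.

Record protocol := Protocol {
  pQ : finType;
  pSigma : finType;
  p_iota : pSigma -> pQ;
  p_omega : pQ -> bool;              (* output map, true = 1, false = 0 *)
  p_delta : pQ -> pQ -> pQ -> pQ -> Prop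
}.

(* A configuration / input is a multiset, represented by its multiplicity
   function. *)
Definition config (Q : finType) := {ffun Q -> nat}.
Definition input (S : finType) := {ffun S -> nat}.

Definition size_ms (T : finType) (m : {ffun T -> nat}) : nat := \sum_(t : T) m t.

Definition init_config (P : protocol) (x : input (pSigma P)) : config (pQ P) :=
  [ffun q => \sum_(s : pSigma P | p_iota s == q) x s].

Definition add2 (Q : finType) (R : config Q) (q1 q2 : Q) : config Q :=
  [ffun q => R q + (q == q1) + (q == q2)].

(* C -> C' : two distinct agents in states q1, q2 (i.e. C = R + {q1,q2})
   are replaced by q1', q2' with (q1,q2,q1',q2') in delta. *)
Definition step (P : protocol) (C C' : config (pQ P)) : Prop :=
  exists (R : config (pQ P)) (q1 q2 q1' q2' : pQ P),
    p_delta q1 q2 q1' q2' /\ C = add2 R q1 q2 /\ C' = add2 R q1' q2'.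
Arguments step : clear implicits.

Definition infinitely_often (Q : finType) (E : nat -> config Q) (C : config Q) :=
  forall N, exists i, N <= i /\ E i = C.

Definition execution (P : protocol) (x : input (pSigma P))
    (E : nat -> config (pQ P)) : Prop :=
  E 0 = init_config x /\ forall i, step P (E i) (E i.+1).

Definition fair (P : protocol) (E : nat -> config (pQ P)) : Prop :=
  forall C, infinitely_often E C ->
    forall C', step P C C' -> infinitely_often E C'.

Definition computes (P : protocol) (p : input (pSigma P) -> bool) : Prop :=
  forall x : input (pSigma P), 2 <= size_ms x ->
    forall E, execution x E -> fair E ->
      exists T, forall t, T <= t ->
        forall q, 0 < E t q -> p_omega q = p x.

Definition BR_neq (Q : Type) (M : Q -> Q -> R) (q' y x : Q) : Prop :=
  x <> q' /\ forall z, z <> q' -> Rle (M z y) (M x y).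

Definition assoc_rel (Q : Type) (M : Q -> Q -> R) (q1 q2 q1' q2' : Q) : Prop :=
  (Rle 0 (M q1 q2) -> q1' = q1) /\
  (Rlt (M q1 q2) 0 -> BR_neq M q1 q2 q1') /\
  (Rle 0 (M q2 q1) -> q2' = q2) /\
  (Rlt (M q2 q1) 0 -> BR_neq M q2 q1 q2').

Definition pavlovian (P : protocol) : Prop :=
  exists M : pQ P -> pQ P -> R,
    forall q1 q2 q1' q2', p_delta q1 q2 q1' q2' <-> assoc_rel M q1 q2 q1' q2'.

Inductive sym := Sig | Sig'.
Inductive st := stN | stY | stS | stS'.

Definition sym_enc (s : sym) : bool := if s is Sig then true else false.
Definition sym_dec (b : bool) : sym := if b then Sig else Sig'.
Lemma sym_encK : cancel sym_enc sym_dec. Proof. by case. Qed.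
HB.instance Definition _ := Finite.copy sym (can_type sym_encK).

Definition st_enc (q : st) : 'I_4 :=
  match q with stN => inord 0 | stY => inord 1 | stS => inord 2 | stS' => inord 3 end.
Definition st_dec (i : 'I_4) : st :=
  match val i with 0 => stN | 1 => stY | 2 => stS | _ => stS' end.
Lemma st_encK : cancel st_enc st_dec.
Proof. by case; rewrite /st_dec /= inordK. Qed.
HB.instance Definition _ := Finite.copy st (can_type st_encK).

Definition iota0 (s : sym) : st := if s is Sig then stS else stS'.
Definition omega0 (q : st) : bool :=
  match q with stS | stY => true | _ => false end.

Definition rule (q1 q2 : st) : st * st :=
  match q1, q2 with
  | stN, stY => (stY, stY)
  | stY, stN => (stY, stY)
  | stN, stS => (stY, stS)
  | stS, stN => (stS, stY)
  | stY, stS' => (stN, stS')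
  | stS', stY => (stS', stN)
  | stS, stS' => (stN, stY)
  | stS', stS => (stY, stN)
  | a, b => (a, b)
  end.

Definition delta0 (q1 q2 q1' q2' : st) : Prop := rule q1 q2 = (q1', q2').

Definition P0 : protocol := @Protocol st sym iota0 omega0 delta0.

(* payoff matrix, rows = player, columns = opponent, order N, Y, sigma, sigma' *)
Definition M0 (q r : st) : R :=
  match q, r with
  | stN, stN => IZR 1 | stN, stY => IZR (-1) | stN, stS => IZR (-1) | stN, stS' => IZR 1
  | stY, stN => IZR 0 | stY, stY => IZR 1 | stY, stS => IZR 1 | stY, stS' => IZR (-1)
  | stS, stN => IZR 0 | stS, stY => IZR 0 | stS, stS => IZR 0 | stS, stS' => IZR (-1)
  | stS', stN => IZR 0 | stS', stY => IZR 0 | stS', stS => IZR (-1) | stS', stS' => IZR 0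
  end.

Definition pred_ge (x : input sym) : bool := x Sig' <= x Sig.

(* Main.v *)
Require Import Defs.
From Stdlib Require Import Reals Lra Lia Classical.
From HB Require Import structures.
From mathcomp Require Import all_boot.

Ltac mlia := unfold subn, addn, muln in *; lia.

Definition st_beq (a b : st) : bool :=
  match a, b with stN,stN | stY,stY | stS,stS | stS',stS' => true | _,_ => false end.
Lemma eq_st (a b : st) : (a == b) = st_beq a b.
Proof. case: a; case: b => /=; first [by apply/eqP | by apply/negbTE/eqP]. Qed.
Lemma eq_sym' (a b : sym) : (a == b) = (sym_enc a == sym_enc b).
Proof. case: a; case: b => /=; first [by apply/eqP | by apply/negbTE/eqP]. Qed.
Lemma sum_sym (F : sym -> nat) : \sum_(s : sym) F s = F Sig + F Sig'.
Proof.
rewrite (bigD1 Sig) //= (bigD1 Sig') ?eq_sym' //= big1 ?addn0 //.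
move=> [] ; rewrite !eq_sym' //.
Qed.

Definition mk (a b c d : nat) : config st :=
  [ffun q => match q with stN => a | stY => b | stS => c | stS' => d end].
Lemma mkE (C : config st) : C = mk (C stN) (C stY) (C stS) (C stS').
Proof. by apply/ffunP => -[]; rewrite ffunE. Qed.

Ltac stp r0 a1 a2 a3 a4 :=
  exists r0, a1, a2, a3, a4; split; first reflexivity;
  split; apply/ffunP; intros []; rewrite !ffunE !eq_st /=; mlia.

Lemma s1 a b c d : step P0 (mk a b c.+1 d.+1) (mk a.+1 b.+1 c d).
Proof. stp (mk a b c d) stS stS' stN stY. Qed.
Lemma s2 a b c d : step P0 (mk a.+1 b c.+1 d) (mk a b.+1 c.+1 d).
Proof. stp (mk a b c d) stN stS stY stS. Qed.
Lemma s3 a b c d : step P0 (mk a b.+1 c d.+1) (mk a.+1 b c d.+1).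
Proof. stp (mk a b c d) stY stS' stN stS'. Qed.
Lemma s4 a b c d : step P0 (mk a.+1 b.+1 c d) (mk a b.+2 c d).
Proof. stp (mk a b c d) stN stY stY stY. Qed.

Inductive reach : config st -> config st -> Prop :=
| rrefl C : reach C C
| rstep C C' C'' : step P0 C C' -> reach C' C'' -> reach C C''.

Lemma reach_trans C1 C2 C3 : reach C1 C2 -> reach C2 C3 -> reach C1 C3.
Proof. elim=> [//|C C' C'' H _ IH] H2; apply: rstep H (IH H2). Qed.

Lemma r1 k a b c d : reach (mk a b (c+k) (d+k)) (mk (a+k) (b+k) c d).
Proof.
elim: k a b => [|k IH] a b; first by rewrite !addn0; constructor.
rewrite !addnS; apply: rstep (s1 _ _ _ _) _.
by have := IH a.+1 b.+1; rewrite !addSn.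
Qed.
Lemma r2 k a b c d : reach (mk (a+k) b c.+1 d) (mk a (b+k) c.+1 d).
Proof.
elim: k a b => [|k IH] a b; first by rewrite !addn0; constructor.
rewrite !addnS; apply: rstep (s2 _ _ _ _) _.
by have := IH a b.+1; rewrite !addSn.
Qed.
Lemma r3 k a b c d : reach (mk a (b+k) c d.+1) (mk (a+k) b c d.+1).
Proof.
elim: k a b => [|k IH] a b; first by rewrite !addn0; constructor.
rewrite !addnS; apply: rstep (s3 _ _ _ _) _.
by have := IH a.+1 b; rewrite !addSn.
Qed.
Lemma r4 k a b c d : reach (mk (a+k) b.+1 c d) (mk a (b.+1+k) c d).
Proof.
elim: k a b => [|k IH] a b; first by rewrite !addn0; constructor.
rewrite !addnS; apply: rstep (s4 _ _ _ _) _.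
by have := IH a b.+1; rewrite !addSn.
Qed.

Definition Good (p : bool) (C : config st) : Prop :=
  if p then C stS' = 0 /\ C stN = 0 else C stS = 0 /\ C stY = 0.

Lemma reach_good a b c d u v : c + v = d + u -> b + c + d <> 0 ->
  exists G, reach (mk a b c d) G /\ Good (v <= u) G.
Proof.
move=> E NZ; case: (leqP v u) => H.
- move/leP: H => H.
  have Hc : c = (c - d) + d by mlia.
  have Hd : d = 0 + d by [].
  have R1 := r1 d a b (c - d) 0.
  rewrite -Hc -Hd in R1.
  case Ec: (c - d) R1 => [|c1] R1.
  + have Hb : b + d = (b + d - 1).+1 by mlia.
    have R2 := r4 (a + d) 0 (b + d - 1) 0 0.
    rewrite -Hb add0n in R2.
    eexists; split; first exact: reach_trans R1 R2.
    by rewrite /Good !ffunE.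
  + have R2 := r2 (a + d) 0 (b + d) c1 0.
    rewrite add0n in R2.
    eexists; split; first exact: reach_trans R1 R2.
    by rewrite /Good !ffunE.
- move/leP: H => H.
  have Hd : d = (d - c - 1).+1 + c by mlia.
  have Hc : c = 0 + c by [].
  have R1 := r1 c a b 0 (d - c - 1).+1.
  rewrite -Hc -Hd in R1.
  have R2 := r3 (b + c) (a + c) 0 0 (d - c - 1).
  rewrite add0n in R2.
  eexists; split; first exact: reach_trans R1 R2.
  rewrite /Good.
  by rewrite !ffunE.
Qed.

Lemma step_facts (C C' : config st) : step P0 C C' ->
  [/\ C' stN + C' stY + C' stS + C' stS' = C stN + C stY + C stS + C stS',
      C' stS + C stS' = C stS + C' stS',
      (C stY + C stS + C stS' <> 0 -> C' stY + C' stS + C' stS' <> 0),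
      (C stS' = 0 /\ C stN = 0 -> C' stS' = 0 /\ C' stN = 0) &
      (C stS = 0 /\ C stY = 0 -> C' stS = 0 /\ C' stY = 0)].
Proof.
move=> [r0 [q1 [q2 [q1' [q2' [H [-> ->]]]]]]].
case: q1 H; case: q2; move=> /= [<- <-]; rewrite !ffunE !eq_st /=; split; mlia.
Qed.

Lemma reach_io (E : nat -> config st) C G : fair (P:=P0) E ->
  infinitely_often E C -> reach C G -> infinitely_often E G.
Proof. move=> F H R; elim: R H => [//|C0 C1 C2 S _ IH] H; apply: IH; exact: F H _ S. Qed.

Lemma ph (f : nat -> config st) (l : seq (config st)) :
  (forall i, f i \in l) -> exists c, infinitely_often f c.
Proof.
move=> Hl; apply: NNPP => Hn.
have Hc : forall c, exists N, forall i, N <= i -> f i <> c.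
  move=> c; apply: NNPP => Hc; apply: Hn; exists c => N.
  apply: NNPP => HN; apply: Hc; exists N => i Hi Hf; apply: HN; by exists i.
have : forall l' : seq (config st), exists N, forall i, N <= i -> f i \notin l'.
  elim=> [|c l' [N2 IH]]; first by exists 0.
  have [N1 H1] := Hc c; exists (maxn N1 N2) => i Hi.
  rewrite in_cons negb_or; apply/andP; split.
  - by apply/eqP; apply: H1; apply: leq_trans Hi; apply: leq_maxl.
  - by apply: IH; apply: leq_trans Hi; apply: leq_maxr.
move=> /(_ l) [N HN]; by move: (HN N (leqnn N)); rewrite Hl.
Qed.

Lemma in_list n (C : config st) : (forall q, C q <= n) ->
  C \in map (fun g : {ffun st -> 'I_n.+1} => [ffun q => (val (g q) : nat)]) (enum {ffun st -> 'I_n.+1}).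
Proof.
move=> H; apply/mapP; exists [ffun q => inord (C q)]; first by rewrite mem_enum.
apply/ffunP => q; rewrite !ffunE; symmetry; apply: inordK; rewrite ltnS; exact: H.
Qed.

Lemma init_counts (x : input sym) : init_config (P:=P0) x = mk 0 0 (x Sig) (x Sig').
Proof.
apply/ffunP => q; rewrite !ffunE big_mkcond sum_sym /=.
by case: q; rewrite !eq_st /= ?addn0.
Qed.

Lemma inv (x : input sym) (E : nat -> config st) : execution (P:=P0) x E ->
  x Sig + x Sig' <> 0 -> forall i,
  [/\ E i stN + E i stY + E i stS + E i stS' = x Sig + x Sig',
      E i stS + x Sig' = E i stS' + x Sig &
      E i stY + E i stS + E i stS' <> 0].
Proof.
move=> [E0 Hs] Hn; elim=> [|i [I1 I2 I3]].
  by rewrite E0 init_counts !ffunE; split; mlia.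
have [J1 J2 J3 _ _] := (@step_facts (E i) (E i.+1) (Hs i)).
split; [mlia | mlia | by apply: J3].
Qed.

Theorem computes_ge : computes (P := P0) pred_ge.
Proof.
change (forall x : input sym, 2 <= size_ms x -> forall E : nat -> config st,
  execution (P:=P0) x E -> fair (P:=P0) E -> exists T, forall t, T <= t ->
  forall q : st, 0 < E t q -> omega0 q = pred_ge x).
move=> x Hx E Ex F.
have Hn : x Sig + x Sig' <> 0.
  by move: Hx; rewrite /size_ms sum_sym => /leP; mlia.
have Hb : forall i q, E i q <= x Sig + x Sig'.
  move=> i q; have [I1 _ _] := @inv x E Ex Hn i; apply/leP; case: q; mlia.
have [c Hc] := @ph E _ (fun i => @in_list _ (E i) (Hb i)).
have [i0 [_ Ei0]] := Hc 0.
have [I1 I2 I3] := @inv x E Ex Hn i0; rewrite Ei0 in I1 I2 I3.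
rewrite (mkE c) in Hc.
have [G [RG GG]] := reach_good (c stN) (c stY) (c stS) (c stS') (x Sig) (x Sig') I2 I3.
have HG := @reach_io E _ _ F Hc RG.
have [t0 [_ Et0]] := HG 0.
have Cl : forall t, t0 <= t -> Good (x Sig' <= x Sig) (E t).
  elim=> [|t IH] Ht.
    by move: Ht; rewrite leqn0 => /eqP Ht; rewrite -Ht Et0.
  move: Ht; rewrite leq_eqVlt => /orP [/eqP <- | Ht]; first by rewrite Et0.
  have [_ _ _ K1 K2] := (@step_facts (E t) (E t.+1) (Ex.2 t)).
  move: (IH Ht); rewrite /Good; case: ifP => _; [exact: K1 | exact: K2].
exists t0 => t Ht q Hq.
move: (Cl t Ht) Hq; rewrite /pred_ge /Good; case: ifP => _ [H1 H2];
  case: q => /=; rewrite ?H1 ?H2 //.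
Qed.
Lemma delta_iff (q1 q2 q1' q2' : st) : delta0 q1 q2 q1' q2' <-> assoc_rel M0 q1 q2 q1' q2'.
Proof.
split.
- unfold delta0; case: q1; case: q2; simpl; intro H; injection H as <- <-;
  unfold assoc_rel, BR_neq, M0; (repeat split); intros;
  first [reflexivity | lra | discriminate | (match goal with z : st |- _ => destruct z end; first [lra | (exfalso; congruence)])].
- intros [H1 [H2 [H3 H4]]]; unfold delta0.
  case: q1 H1 H2 H3 H4; case: q2; case: q1'; case: q2'; unfold M0, BR_neq; intros H1 H2 H3 H4; simpl; try reflexivity; exfalso;
  repeat match goal with
  | H : Rle 0 _ -> _ |- _ => first [specialize (H ltac:(lra)) | clear H]
  | H : Rlt _ 0 -> _ |- _ => first [specialize (H ltac:(lra)) | clear H]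
  | H : _ /\ _ |- _ => destruct H
  end;
  first [ match goal with H : ?a = ?b |- _ => discriminate H end
        | match goal with H : ?a <> ?a |- _ => now apply H end
        | match goal with H : forall z, z <> _ -> _ |- _ =>
          first [ specialize (H stN ltac:(discriminate)); lra
                | specialize (H stY ltac:(discriminate)); lra
                | specialize (H stS ltac:(discriminate)); lra
                | specialize (H stS' ltac:(discriminate)); lra ] end ].
Qed.

Theorem mainTheorem6 :
  pavlovian P0 /\
  (forall q1 q2 q1' q2' : st, delta0 q1 q2 q1' q2' <-> assoc_rel M0 q1 q2 q1' q2') /\
  computes (P := P0) pred_ge.
Proof.
split; [| split].
- exists M0; exact: delta_iff.
- exact: delta_iff.
- exact: computes_ge.
Qed.
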